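(* Let $\sigma\in\mathrm{Av}_n(312)$ and let $i$ be a descent of $\sigma$ (i.e. $\sigma(i)>\sigma(i+1)$). Let $j\in[n]$ be the minimal index such that $\sigma(k)\ge\sigma(i)$ for all $k\in[j,i]$, and let $\tau=\sigma\circ(i\ \ i{+}1)$ be obtained from $\sigma$ by swapping the entries in positions $i$ and $i+1$. Then \[ \pi_\downarrow(\tau)=\sigma\circ\begin{pmatrix} i{+}1 & i & \cdots & j{+}1 & j\end{pmatrix}, \] i.e. $\pi_\downarrow(\tau)$ is obtained from $\sigma$ by moving the entry $\sigma(i+1)$ to position $j$ and shifting the entries in positions $j,\dots,i$ one place to the right.
   Context: $\mathrm{Av}_n(312)$ is the set of permutations $\sigma\in S_n$ with no indices $i_1<i_2<i_3$ such that $\sigma(i_1)>\sigma(i_3)>\sigma(i_2)$. Permutations are written in one-line notation and composed as functions; the cycle $(i{+}1\ i\ \cdots\ j)$ maps $i+1\mapsto i\mapsto\cdots\mapsto j\mapsto i+1$. For $\sigma\in S_n$, an allowable swap is available if there are indices $a,b$ with $a+1<b$ and $\sigma(a+1)<\sigma(b)<\sigma(a)$; it exchanges the entries in positions $a$ and $a+1$. The projection $\pi_\downarrow:S_n\to\mathrm{Av}_n(312)$ sends $\sigma$ to the permutation obtained by repeatedly applying allowable swaps until none is available; this result is known to be independent of the order of swaps. *)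

(* Defs.v *)
(* Permutations of [n] in one-line notation as seq nat,
   positions and values are 1-based: sigma(k) = nth 0 s (k-1). *)
From Stdlib Require Import Relations.
From mathcomp Require Import all_boot.
Set Implicit Arguments. Unset Strict Implicit. Unset Printing Implicit Defensive.

Definition sg (s : seq nat) (k : nat) : nat := nth 0 s k.-1.

Definition is_perm (n : nat) (s : seq nat) : Prop := perm_eq s (iota 1 n).

Definition avoids312 (n : nat) (s : seq nat) : Prop :=
  forall i1 i2 i3, 1 <= i1 -> i1 < i2 -> i2 < i3 -> i3 <= n ->
    ~ (sg s i3 < sg s i1 /\ sg s i2 < sg s i3).

Definition compose_pos (s : seq nat) (f : nat -> nat) : seq nat :=
  mkseq (fun k => sg s (f k.+1)) (size s).

Definition transp (a b : nat) (k : nat) : nat :=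
  if k == a then b else if k == b then a else k.

(* the cycle (i+1 i ... j+1 j): i+1 |-> i |-> ... |-> j |-> i+1 *)
Definition cyc (j i : nat) (k : nat) : nat :=
  if k == j then i.+1 else if (j < k) && (k <= i.+1) then k.-1 else k.

Definition allowable_swap (s t : seq nat) : Prop :=
  exists a b, 1 <= a /\ a.+1 < b /\ b <= size s /\
                 sg s a.+1 < sg s b /\ sg s b < sg s a /\
                 t = compose_pos s (transp a a.+1).

Definition no_allowable_swap (s : seq nat) : Prop :=
  forall t, ~ allowable_swap s t.

(* rho is the result of repeatedly applying allowable swaps to tau until
   none is available; by the (cited) order-independence this is pi_down(tau). *)
Definition is_pi_down (tau rho : seq nat) : Prop :=
  clos_refl_trans (seq nat) allowable_swap tau rho /\ no_allowable_swap rho.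

(* Main.v *)
Require Import Defs.
From mathcomp Require Import all_boot.
From mathcomp Require Import zify.

Ltac destr_if :=
  match goal with |- context[if ?b then _ else _] =>
    lazymatch b with context[if _ then _ else _] => fail | _ => destruct b eqn:? end end.

Lemma sg_comp s f k : 0 < k -> k <= size s -> sg (compose_pos s f) k = sg s (f k).
Proof.
move=> k0 kn; rewrite {1}/sg /compose_pos nth_mkseq; last lia.
by rewrite prednK.
Qed.

Lemma size_comp s f : size (compose_pos s f) = size s.
Proof. by rewrite size_mkseq. Qed.

Lemma nth_comp s f k : k < size s -> nth 0 (compose_pos s f) k = sg s (f k.+1).
Proof. by move=> h; rewrite /compose_pos nth_mkseq. Qed.

Lemma comp_comp s f g :
  (forall k, 0 < k -> k <= size s -> 0 < g k /\ g k <= size s) ->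
  compose_pos (compose_pos s f) g = compose_pos s (fun k => f (g k)).
Proof.
move=> H; apply: (@eq_from_nth _ 0); rewrite ?size_comp // => k kl.
rewrite !nth_comp ?size_comp //.
have [h1 h2] := H k.+1 (ltn0Sn _) kl.
by rewrite sg_comp.
Qed.

Lemma cyc_nat j i k : (k = j /\ cyc j i k = i.+1) \/ (j < k /\ k <= i.+1 /\ cyc j i k = k.-1)
  \/ ((k < j \/ i.+1 < k) /\ cyc j i k = k).
Proof. rewrite /cyc; repeat destr_if; lia. Qed.

Theorem proposition4p2 (n : nat) (s : seq nat) (i j : nat) :
  is_perm n s -> avoids312 n s ->
  1 <= i -> i < n -> sg s i.+1 < sg s i ->
  1 <= j -> j <= i ->
  (forall k, j <= k -> k <= i -> sg s i <= sg s k) ->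
  (forall j', 1 <= j' -> (forall k, j' <= k -> k <= i -> sg s i <= sg s k) ->
     j <= j') ->
  is_pi_down (compose_pos s (transp i i.+1)) (compose_pos s (cyc j i)).
Proof.
move=> Hp Hav i1 iln dsc j1 ji Hmin Hjmin.
have sz : size s = n by rewrite (perm_size Hp) size_iota.
have us : uniq s by rewrite (perm_uniq Hp) iota_uniq.
have inj : forall x y, 1 <= x -> x <= n -> 1 <= y -> y <= n -> sg s x = sg s y -> x = y.
  move=> x y hx1 hx2 hy1 hy2; rewrite /sg => /eqP; rewrite nth_uniq ?sz //; try lia.
have cyc_ii : compose_pos s (transp i i.+1) = compose_pos s (cyc i i).
  apply: eq_mkseq => k; congr (sg s _); rewrite /transp /cyc; repeat destr_if; lia.
split.
  rewrite cyc_ii.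
  have chain : forall d, d <= i - j -> Relation_Operators.clos_refl_trans _ allowable_swap
      (compose_pos s (cyc i i)) (compose_pos s (cyc (i - d) i)).
    elim=> [|d IH] hd; first by rewrite subn0; apply: Relation_Operators.rt_refl.
    apply: Relation_Operators.rt_trans (IH _) _; first lia.
    apply: Relation_Operators.rt_step.
    exists (i - d.+1), i.+1.
    have E : (i - d.+1).+1 = i - d by lia.
    rewrite E size_comp sz.
    rewrite !sg_comp ?sz; try lia.
    have e1 : cyc (i - d) i (i - d) = i.+1 by rewrite /cyc eqxx.
    have e2 : cyc (i - d) i i.+1 = i by rewrite /cyc; repeat destr_if; lia.
    have e3 : cyc (i - d) i (i - d.+1) = i - d.+1 by rewrite /cyc; repeat destr_if; lia.
    rewrite e1 e2 e3.
    have h4 : sg s i <= sg s (i - d.+1) by apply: Hmin; lia.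
    have h5 : sg s i <> sg s (i - d.+1) by move=> /inj; lia.
    do 5 (split; first lia).
    rewrite comp_comp; last by move=> k k0 kn; rewrite /transp; repeat destr_if; lia.
    apply: eq_mkseq => k; congr (sg s _); rewrite /transp /cyc; repeat destr_if; lia.
  have := chain (i - j) (leqnn _).
  by have -> : i - (i - j) = j by lia.
move=> t [a [b [a1 [ab [bs [h1 [h2 _]]]]]]].
rewrite size_comp sz in bs.
rewrite !sg_comp ?sz in h1 h2; try lia.
have Ha := cyc_nat j i a; have Ha1 := cyc_nat j i a.+1; have Hb := cyc_nat j i b.
have [A|nA] := boolP ((a.+1 == j) && (b <= i.+1)).
  have sj : sg s a < sg s i.
    rewrite ltnNge; apply/negP => hle.
    have : j <= a; last lia.
    apply: Hjmin; first lia.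
    move=> k k1 k2; have [->|kj] := eqVneq k a; first done.
    apply: Hmin; lia.
  have ea : cyc j i a = a by lia.
  have eb : cyc j i b = b.-1 by lia.
  rewrite ea eb in h2.
  have := Hmin b.-1; lia.
have [B|nB] := eqVneq a j.
  have ea : cyc j i a = i.+1 by lia.
  have ea1 : cyc j i a.+1 = j by lia.
  rewrite ea1 in h1; rewrite ea in h2.
  have := Hmin j; lia.
have H1 : 1 <= cyc j i a by lia.
have H2 : cyc j i a < cyc j i a.+1 by lia.
have H3 : cyc j i a.+1 < cyc j i b by lia.
have H4 : cyc j i b <= n by lia.
exact: (Hav _ _ _ H1 H2 H3 H4 (conj h2 h1)).
Qed.
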